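(* Let $V_1\subseteq\mathbb{Z}^2$ be infinite and connected with $V_1^c=\mathbb{Z}^2\setminus V_1$ infinite and connected. Let $F=\{\{x,y\}\in\mathcal{E}^2:x\in V_1,y\in V_1^c\}$ be its edge boundary and $F^*$ the set of dual edges of edges in $F$. Then $F^*$ consists of a single doubly infinite dual path which is non-self-intersecting: writing $W^*$ for the set of endpoints of dual edges in $F^*$, the graph $G^*=(W^*,F^* )$ is connected and infinite, and every $v^*\in W^*$ has degree exactly $2$ in $G^*$.
   Context: Connectedness of subsets of $\mathbb{Z}^2$ is with respect to the nearest-neighbour lattice $(\mathbb{Z}^2,\mathcal{E}^2)$. The dual lattice has vertex set $\mathbb{Z}^2+(1/2,1/2)$ and edge set $\mathcal{E}^2+(1/2,1/2)$; the dual edge $e^*$ of $e\in\mathcal{E}^2$ is the unique dual edge bisecting $e$. *)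

(* Defs.v *)
From Stdlib Require Import ZArith List Relations.
Open Scope Z_scope.

Definition pt := (Z * Z)%type.

Definition adj (x y : pt) : Prop :=
  Z.abs (fst x - fst y) + Z.abs (snd x - snd y) = 1.

Definition infinite_set (A : pt -> Prop) : Prop :=
  forall l : list pt, exists x, A x /\ ~ In x l.

Definition reach (E : pt -> pt -> Prop) : pt -> pt -> Prop :=
  clos_refl_trans pt E.

Definition connected_set (A : pt -> Prop) : Prop :=
  forall x y, A x -> A y -> reach (fun u v => A u /\ A v /\ adj u v) x y.

Definition compl (A : pt -> Prop) : pt -> Prop := fun x => ~ A x.

(* Dual lattice: the dual vertex u + (1/2,1/2) is ENCODED by u : Z*Z.
   Dual edges are {u,v} with adj u v (i.e. E^2 + (1/2,1/2)).
   The dual edge {u,v} bisects the primal edge {x,y} iff they have the same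
   midpoint: (u+v)/2 + (1/2,1/2) = (x+y)/2, i.e. u + v + (1,1) = x + y. *)
Definition bisects (x y u v : pt) : Prop :=
  adj x y /\ adj u v /\
  fst u + fst v + 1 = fst x + fst y /\ snd u + snd v + 1 = snd x + snd y.

Definition dual_boundary (V1 : pt -> Prop) (u v : pt) : Prop :=
  exists x y, V1 x /\ ~ V1 y /\ adj x y /\ bisects x y u v.

Definition dual_endpoints (V1 : pt -> Prop) (u : pt) : Prop :=
  exists v, dual_boundary V1 u v \/ dual_boundary V1 v u.

Definition degree_two (E : pt -> pt -> Prop) (u : pt) : Prop :=
  exists v1 v2, v1 <> v2 /\
    forall v, (E u v \/ E v u) <-> (v = v1 \/ v = v2).

(* Main.v *)
Require Import Defs.
From Stdlib Require Import ZArith List Relations Lia Bool Classical ClassicalEpsilon.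
Open Scope Z_scope.
Lemma pair_eq (a b c d : Z) : (a,b) = (c,d) <-> a = c /\ b = d.
Proof. split; [intro H; injection H; auto | intros [-> ->]; auto]. Qed.

Lemma adj_cases (p1 p2 q1 q2 : Z) : adj (p1,p2) (q1,q2) ->
  (q1 = p1+1 /\ q2 = p2) \/ (q1 = p1-1 /\ q2 = p2) \/ (q1 = p1 /\ q2 = p2+1) \/ (q1 = p1 /\ q2 = p2 -1).
Proof. unfold adj; simpl; lia. Qed.

Lemma bis_char (c1 c2 d1 d2 p1 p2 q1 q2 : Z) : bisects (c1,c2) (d1,d2) (p1,p2) (q1,q2) ->
  (q1 = p1+1 /\ q2 = p2 /\ ((c1 = p1+1 /\ c2 = p2 /\ d1 = p1+1 /\ d2 = p2+1) \/ (d1 = p1+1 /\ d2 = p2 /\ c1 = p1+1 /\ c2 = p2+1))) \/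
  (q1 = p1-1 /\ q2 = p2 /\ ((c1 = p1 /\ c2 = p2 /\ d1 = p1 /\ d2 = p2+1) \/ (d1 = p1 /\ d2 = p2 /\ c1 = p1 /\ c2 = p2+1))) \/
  (q1 = p1 /\ q2 = p2+1 /\ ((c1 = p1 /\ c2 = p2+1 /\ d1 = p1+1 /\ d2 = p2+1) \/ (d1 = p1 /\ d2 = p2+1 /\ c1 = p1+1 /\ c2 = p2+1))) \/
  (q1 = p1 /\ q2 = p2-1 /\ ((c1 = p1 /\ c2 = p2 /\ d1 = p1+1 /\ d2 = p2) \/ (d1 = p1 /\ d2 = p2 /\ c1 = p1+1 /\ c2 = p2))).
Proof. intros [Ha [Hb [E1 E2]]]. simpl in E1, E2.
  apply adj_cases in Ha. apply adj_cases in Hb.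
  destruct Ha as [[-> ->]|[[-> ->]|[[-> ->]|[-> ->]]]];
  destruct Hb as [[-> ->]|[[-> ->]|[[-> ->]|[-> ->]]]]; lia. Qed.

Definition sep (V1 : pt -> Prop) (c d : pt) : Prop := (V1 c /\ ~ V1 d) \/ (V1 d /\ ~ V1 c).

Ltac pick := first [ split; [reflexivity | unfold sep; tauto]
                   | left; split; [reflexivity|unfold sep; tauto] | right; pick ].

Lemma DB_iff V1 p1 p2 q : dual_boundary V1 (p1,p2) q <->
  (q = (p1+1,p2) /\ sep V1 (p1+1,p2) (p1+1,p2+1)) \/
  (q = (p1-1,p2) /\ sep V1 (p1,p2) (p1,p2+1)) \/
  (q = (p1,p2+1) /\ sep V1 (p1,p2+1) (p1+1,p2+1)) \/
  (q = (p1,p2-1) /\ sep V1 (p1,p2) (p1+1,p2)).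
Proof.
  split.
  - intros [[x1 x2] [[y1 y2] [Hx [Hy [_ Hb]]]]]. destruct q as [q1 q2].
    apply bis_char in Hb.
    repeat match goal with H : _ /\ _ |- _ => destruct H | H : _ \/ _ |- _ => destruct H end;
    subst; pick.
  - intros H; unfold sep in H; repeat match goal with H : _ /\ _ |- _ => destruct H | H : _ \/ _ |- _ => destruct H end;
    subst; eexists _, _; (split; [eassumption|split;[eassumption|]]);
    unfold bisects, adj; simpl; repeat split; lia.
Qed.

Lemma DB_sym V1 p q : dual_boundary V1 p q -> dual_boundary V1 q p.
Proof.
  intros [x [y [Hx [Hy [Ha [Hb [Hc [E1 E2]]]]]]]]. exists x, y. repeat split; auto.
  - unfold adj in *; lia.
  - lia.
  - lia.
Qed.

Lemma DB_adj V1 p q : dual_boundary V1 p q -> adj p q.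
Proof. intros [x [y [_ [_ [_ [_ [H _]]]]]]]; exact H. Qed.

Lemma bis_mk c d : adj c d -> exists p q, bisects c d p q.
Proof.
  destruct c as [c1 c2], d as [d1 d2]. intro H. pose proof H as H'. apply adj_cases in H'.
  destruct H' as [[-> ->]|[[-> ->]|[[-> ->]|[-> ->]]]].
  - exists (c1, c2-1), (c1,c2). unfold bisects, adj in *; simpl; repeat split; lia.
  - exists (c1-1, c2-1), (c1-1,c2). unfold bisects, adj in *; simpl; repeat split; lia.
  - exists (c1-1, c2), (c1,c2). unfold bisects, adj in *; simpl; repeat split; lia.
  - exists (c1-1, c2-1), (c1,c2-1). unfold bisects, adj in *; simpl; repeat split; lia.
Qed.

Lemma bis_range c1 c2 d p1 p2 q : bisects (c1,c2) d (p1,p2) q -> c1 - 1 <= p1 <= c1 /\ c2 - 1 <= p2 <= c2.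
Proof.
  destruct d as [d1 d2], q as [q1 q2]. intro H. apply bis_char in H. lia.
Qed.

Lemma bis_swap c d p q : bisects c d p q -> bisects d c p q.
Proof. unfold bisects, adj; intros; lia. Qed.

Lemma sep_DB V1 c d p q : bisects c d p q -> sep V1 c d -> dual_boundary V1 p q.
Proof.
  intros Hb [[H1 H2]|[H1 H2]].
  - exists c, d. repeat split; auto; apply Hb.
  - exists d, c. pose proof (bis_swap _ _ _ _ Hb). repeat split; auto; apply H.
Qed.

Fixpoint xs (g : Z -> bool) (s : Z) (n : nat) : bool :=
  match n with O => false | S k => xorb (g (s + Z.of_nat k)) (xs g s k) end.

Lemma xs_front g k : forall s, xs g s (S k) = xorb (g s) (xs g (s+1) k).
Proof.
  induction k; intro s.
  - simpl. rewrite Z.add_0_r. reflexivity.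
  - change (xs g s (S (S k))) with (xorb (g (s + Z.of_nat (S k))) (xs g s (S k))).
    rewrite IHk. simpl xs.
    replace (s + Z.of_nat (S k)) with (s + 1 + Z.of_nat k) by lia.
    destruct (g s), (g (s+1+Z.of_nat k)), (xs g (s+1) k); reflexivity.
Qed.

Definition Sx (g : Z -> bool) (n : Z) : bool :=
  if 0 <=? n then xs g 0 (Z.to_nat n) else xs g n (Z.to_nat (-n)).

Lemma Sx0 g : Sx g 0 = false. Proof. reflexivity. Qed.

Lemma Sx_step g n : Sx g (n+1) = xorb (Sx g n) (g n).
Proof.
  unfold Sx. destruct (Z.leb_spec 0 n).
  - destruct (Z.leb_spec 0 (n+1)); [|lia].
    replace (Z.to_nat (n+1)) with (S (Z.to_nat n)) by lia. simpl.
    rewrite Z2Nat.id by lia. apply xorb_comm.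
  - destruct (Z.leb_spec 0 (n+1)).
    + assert (n = -1) by lia. subst. simpl. destruct (g (-1)); reflexivity.
    + replace (Z.to_nat (-n)) with (S (Z.to_nat (- (n+1)))) by lia.
      rewrite xs_front. destruct (g n), (xs g (n+1) (Z.to_nat (- (n+1)))); reflexivity.
Qed.

Lemma Zind2 (T : Z -> Prop) : T 0 -> (forall n, T n <-> T (n+1)) -> forall n, T n.
Proof.
  intros H0 HS. apply Z.peano_ind; auto.
  - intros x Hx. rewrite <- Z.add_1_r. apply (proj1 (HS x)), Hx.
  - intros x Hx. apply (proj2 (HS (Z.pred x))). replace (Z.pred x + 1) with x by lia. exact Hx.
Qed.

Lemma potential (cv ch : Z -> Z -> bool) :
  (forall i j, xorb (xorb (ch i j) (cv (i+1) j)) (xorb (ch i (j+1)) (cv i j)) = false) ->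
  exists f : pt -> bool, forall i j,
    f (i, j+1) = xorb (f (i,j)) (cv i j) /\ f (i+1, j) = xorb (f (i,j)) (ch i j).
Proof.
  intro Hp.
  exists (fun p => xorb (Sx (fun k => ch k 0) (fst p)) (Sx (fun k => cv (fst p) k) (snd p))).
  intros i j; simpl. split.
  - rewrite Sx_step. destruct (Sx (fun k => ch k 0) i), (Sx (fun k => cv i k) j), (cv i j); reflexivity.
  - rewrite Sx_step.
    assert (T : forall j, xorb (xorb (Sx (fun k => cv (i+1) k) j) (Sx (fun k => cv i k) j))
                          (xorb (ch i 0) (ch i j)) = false).
    { apply Zind2.
      - rewrite !Sx0. destruct (ch i 0); reflexivity.
      - intro n. rewrite !Sx_step. pose proof (Hp i n) as H. revert H.
        destruct (Sx (fun k => cv (i+1) k) n), (Sx (fun k => cv i k) n), (ch i 0), (ch i n),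
          (cv (i+1) n), (cv i n), (ch i (n+1)); simpl; intuition. }
    specialize (T j). revert T.
    destruct (Sx (fun k => ch k 0) i), (ch i 0), (Sx (fun k : Z => cv (i + 1) k) j),
      (Sx (fun k => cv i k) j), (ch i j); simpl; intuition.
Qed.

Lemma bis_uniq x y c d p q : bisects x y p q -> bisects c d p q -> (x = c /\ y = d) \/ (x = d /\ y = c).
Proof.
  destruct x as [x1 x2], y as [y1 y2], c as [c1 c2], d as [d1 d2], p as [p1 p2], q as [q1 q2].
  intros H1 H2. apply bis_char in H1. apply bis_char in H2. rewrite !pair_eq. lia.
Qed.

Lemma iff_bool (b1 b2 : bool) : (b1 = true <-> b2 = true) -> b1 = b2.
Proof. destruct b1, b2; intuition. Qed.

Definition bD V1 u (p q : pt) : bool :=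
  if excluded_middle_informative (dual_boundary V1 p q /\ reach (dual_boundary V1) u p) then true else false.
Definition vb (V1 : pt -> Prop) (c : pt) : bool := if excluded_middle_informative (V1 c) then true else false.

Lemma bD_true V1 u p q : bD V1 u p q = true <-> dual_boundary V1 p q /\ reach (dual_boundary V1) u p.
Proof. unfold bD. destruct (excluded_middle_informative _); intuition discriminate. Qed.

Lemma bD_sym V1 u p q : bD V1 u p q = bD V1 u q p.
Proof.
  apply iff_bool. rewrite !bD_true. split; intros [H1 H2]; split.
  - apply DB_sym; assumption.
  - exact (rt_trans _ _ _ _ _ H2 (rt_step _ _ _ _ H1)).
  - apply DB_sym; assumption.
  - exact (rt_trans _ _ _ _ _ H2 (rt_step _ _ _ _ H1)).
Qed.

Lemma sep_vb V1 c d : sep V1 c d <-> xorb (vb V1 c) (vb V1 d) = true.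
Proof.
  unfold sep, vb. destruct (excluded_middle_informative (V1 c)), (excluded_middle_informative (V1 d)); simpl; intuition discriminate.
Qed.

Lemma DB_R V1 i j : dual_boundary V1 (i,j) (i+1,j) <-> sep V1 (i+1,j) (i+1,j+1).
Proof. rewrite DB_iff, !pair_eq. split; [intros [[? ?]|[[? ?]|[[? ?]|[? ?]]]]; try (exfalso; lia); assumption | intro; left; split; [lia|assumption]]. Qed.
Lemma DB_L V1 i j : dual_boundary V1 (i,j) (i-1,j) <-> sep V1 (i,j) (i,j+1).
Proof. rewrite DB_iff, !pair_eq. split; [intros [[? ?]|[[? ?]|[[? ?]|[? ?]]]]; try (exfalso; lia); assumption | intro; right; left; split; [lia|assumption]]. Qed.
Lemma DB_U V1 i j : dual_boundary V1 (i,j) (i,j+1) <-> sep V1 (i,j+1) (i+1,j+1).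
Proof. rewrite DB_iff, !pair_eq. split; [intros [[? ?]|[[? ?]|[[? ?]|[? ?]]]]; try (exfalso; lia); assumption | intro; right; right; left; split; [lia|assumption]]. Qed.
Lemma DB_D V1 i j : dual_boundary V1 (i,j) (i,j-1) <-> sep V1 (i,j) (i+1,j).
Proof. rewrite DB_iff, !pair_eq. split; [intros [[? ?]|[[? ?]|[[? ?]|[? ?]]]]; try (exfalso; lia); assumption | intro; right; right; right; split; [lia|assumption]]. Qed.

Lemma bD_reach V1 u i j q (sepq : Prop) : (dual_boundary V1 (i,j) q <-> sepq) ->
  bD V1 u (i,j) q = true <-> (reach (dual_boundary V1) u (i,j) /\ sepq).
Proof. intro H. rewrite bD_true, H. tauto. Qed.

Lemma plaq V1 u i j :
  xorb (xorb (bD V1 u (i,j-1) (i,j)) (bD V1 u (i+1-1,j) (i+1,j)))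
       (xorb (bD V1 u (i,j+1-1) (i,j+1)) (bD V1 u (i-1,j) (i,j))) = false.
Proof.
  replace (i+1-1) with i by lia. replace (j+1-1) with j by lia.
  rewrite (bD_sym _ _ (i,j-1) (i,j)), (bD_sym _ _ (i-1,j) (i,j)).
  pose proof (bD_reach V1 u i j _ _ (DB_D V1 i j)) as HD.
  pose proof (bD_reach V1 u i j _ _ (DB_R V1 i j)) as HR.
  pose proof (bD_reach V1 u i j _ _ (DB_U V1 i j)) as HU.
  pose proof (bD_reach V1 u i j _ _ (DB_L V1 i j)) as HL.
  rewrite !sep_vb in HD, HR, HU, HL.
  destruct (classic (reach (dual_boundary V1) u (i,j))) as [Hr|Hr].
  - revert HD HR HU HL.
    destruct (bD V1 u (i,j) (i,j-1)), (bD V1 u (i,j) (i+1,j)), (bD V1 u (i,j) (i,j+1)), (bD V1 u (i,j) (i-1,j)),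
      (vb V1 (i,j)), (vb V1 (i+1,j)), (vb V1 (i+1,j+1)), (vb V1 (i,j+1)); simpl; intuition.
  - revert HD HR HU HL.
    destruct (bD V1 u (i,j) (i,j-1)), (bD V1 u (i,j) (i+1,j)), (bD V1 u (i,j) (i,j+1)), (bD V1 u (i,j) (i-1,j)); simpl; intuition.
Qed.

Lemma conn_main V1 : connected_set V1 -> connected_set (compl V1) ->
  forall u w, dual_endpoints V1 u -> dual_endpoints V1 w -> reach (dual_boundary V1) u w.
Proof.
  intros C1 C2 u w Hu Hw.
  destruct (potential (fun i j => bD V1 u (i-1,j) (i,j)) (fun i j => bD V1 u (i,j-1) (i,j)))
    as [f Hf]; [intros; apply plaq|].
  assert (Hfb : forall c d p q, bisects c d p q -> xorb (f c) (f d) = bD V1 u p q).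
  { intros [c1 c2] [d1 d2] [p1 p2] [q1 q2] Hb. apply bis_char in Hb.
    repeat match goal with H : _ /\ _ |- _ => destruct H | H : _ \/ _ |- _ => destruct H end; subst.
    - destruct (Hf (p1+1) p2) as [E _]. rewrite E. replace (p1+1-1) with p1 by lia.
      destruct (f (p1+1,p2)), (bD V1 u (p1,p2) (p1+1,p2)); reflexivity.
    - destruct (Hf (p1+1) p2) as [E _]. rewrite E. replace (p1+1-1) with p1 by lia.
      destruct (f (p1+1,p2)), (bD V1 u (p1,p2) (p1+1,p2)); reflexivity.
    - destruct (Hf p1 p2) as [E _]. rewrite E, bD_sym.
      destruct (f (p1,p2)), (bD V1 u (p1,p2) (p1-1,p2)); reflexivity.
    - destruct (Hf p1 p2) as [E _]. rewrite E, bD_sym.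
      destruct (f (p1,p2)), (bD V1 u (p1,p2) (p1-1,p2)); reflexivity.
    - destruct (Hf p1 (p2+1)) as [_ E]. rewrite E. replace (p2+1-1) with p2 by lia.
      destruct (f (p1,p2+1)), (bD V1 u (p1,p2) (p1,p2+1)); reflexivity.
    - destruct (Hf p1 (p2+1)) as [_ E]. rewrite E. replace (p2+1-1) with p2 by lia.
      destruct (f (p1,p2+1)), (bD V1 u (p1,p2) (p1,p2+1)); reflexivity.
    - destruct (Hf p1 p2) as [_ E]. rewrite E, bD_sym.
      destruct (f (p1,p2)), (bD V1 u (p1,p2) (p1,p2-1)); reflexivity.
    - destruct (Hf p1 p2) as [_ E]. rewrite E, bD_sym.
      destruct (f (p1,p2)), (bD V1 u (p1,p2) (p1,p2-1)); reflexivity. }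
  assert (Hconst : forall A : pt -> Prop, (forall c d, A c -> A d -> ~ sep V1 c d) ->
            forall c d, reach (fun a b => A a /\ A b /\ adj a b) c d -> f c = f d).
  { intros A HA c d H. induction H as [a b [Ha [Hb Hab]]| |]; [|reflexivity|congruence].
    destruct (bis_mk _ _ Hab) as [p [q Hpq]].
    pose proof (Hfb _ _ _ _ Hpq) as E.
    destruct (bD V1 u p q) eqn:Eb.
    - exfalso. apply bD_true in Eb. destruct Eb as [[x [y [Hx [Hy [_ Hb']]]]] _].
      destruct (bis_uniq _ _ _ _ _ _ Hb' Hpq) as [[-> ->]|[-> ->]]; apply (HA a b Ha Hb); unfold sep; tauto.
    - destruct (f a), (f b); simpl in E; congruence. }
  destruct Hu as [v Hv]. assert (Huv : dual_boundary V1 u v) by (destruct Hv; auto using DB_sym).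
  destruct Hw as [v' Hv']. assert (Hwv : dual_boundary V1 w v') by (destruct Hv'; auto using DB_sym).
  pose proof Huv as Huv'. destruct Huv' as [x0 [y0 [Hx0 [Hy0 [_ Hb0]]]]].
  pose proof Hwv as Hwv'. destruct Hwv' as [x1 [y1 [Hx1 [Hy1 [_ Hb1]]]]].
  assert (E0 : xorb (f x0) (f y0) = true).
  { rewrite (Hfb _ _ _ _ Hb0). apply bD_true. split; [exact Huv | apply rt_refl]. }
  assert (Ex : f x0 = f x1).
  { apply (Hconst V1); [unfold sep; tauto| apply C1; auto]. }
  assert (Ey : f y0 = f y1).
  { apply (Hconst (compl V1)); [unfold sep, compl; tauto| apply C2; auto]. }
  rewrite Ex, Ey, (Hfb _ _ _ _ Hb1) in E0. apply bD_true in E0. apply E0.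
Qed.
Definition ray (a : pt) (m k : Z) : bool := (m =? fst a) && (snd a <=? k).
Definition sigR a1 a2 (p : pt) : bool := (fst p =? a1) && (a2 <=? snd p).
Definition sigL a1 a2 (p : pt) : bool := (fst p =? a1 - 1) && (a2 <=? snd p).

Definition Inv (A : pt -> Prop) (x a : pt) : Prop := exists h : pt -> bool,
  (forall p1 p2, xorb (xorb (xorb (h (p1,p2)) (h (p1+1,p2))) (ray x (p1+1) p2)) (ray a (p1+1) p2) = true ->
     A (p1+1,p2) /\ A (p1+1,p2+1)) /\
  (forall p1 p2, xorb (h (p1,p2)) (h (p1,p2+1)) = true -> A (p1,p2+1) /\ A (p1+1,p2+1)).

Ltac zb := unfold ray, sigR, sigL; simpl;
  repeat match goal with |- context [?x =? ?y] => destruct (Z.eqb_spec x y)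
    | |- context [?x <=? ?y] => destruct (Z.leb_spec x y) end; simpl; intros; try discriminate; try lia.

Lemma xor4 hp hq sp sq rx ra rb : xorb (xorb (xorb (xorb hp sp) (xorb hq sq)) rx) rb = true ->
  xorb (xorb (xorb hp hq) rx) ra = true \/ xorb (xorb (xorb sp sq) ra) rb = true.
Proof. destruct hp, hq, sp, sq, rx, ra, rb; simpl; auto. Qed.
Lemma xor2 hp hq sp sq : xorb (xorb hp sp) (xorb hq sq) = true -> xorb hp hq = true \/ xorb sp sq = true.
Proof. destruct hp, hq, sp, sq; simpl; auto. Qed.

Lemma sR_H a1 a2 p1 p2 : xorb (xorb (xorb (sigR a1 a2 (p1,p2)) (sigR a1 a2 (p1+1,p2))) (ray (a1,a2) (p1+1) p2)) (ray (a1+1,a2) (p1+1) p2) = true -> False.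
Proof. zb. Qed.
Lemma sR_V a1 a2 p1 p2 : xorb (sigR a1 a2 (p1,p2)) (sigR a1 a2 (p1,p2+1)) = true -> p1 = a1 /\ p2 + 1 = a2.
Proof. zb. Qed.
Lemma sL_H a1 a2 p1 p2 : xorb (xorb (xorb (sigL a1 a2 (p1,p2)) (sigL a1 a2 (p1+1,p2))) (ray (a1,a2) (p1+1) p2)) (ray (a1-1,a2) (p1+1) p2) = true -> False.
Proof. zb. Qed.
Lemma sL_V a1 a2 p1 p2 : xorb (sigL a1 a2 (p1,p2)) (sigL a1 a2 (p1,p2+1)) = true -> p1 = a1 - 1 /\ p2 + 1 = a2.
Proof. zb. Qed.
Lemma sU_H a1 a2 p1 p2 : xorb (xorb (xorb false false) (ray (a1,a2) (p1+1) p2)) (ray (a1,a2+1) (p1+1) p2) = true -> p1 + 1 = a1 /\ p2 = a2.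
Proof. zb. Qed.
Lemma sD_H a1 a2 p1 p2 : xorb (xorb (xorb false false) (ray (a1,a2) (p1+1) p2)) (ray (a1,a2-1) (p1+1) p2) = true -> p1 + 1 = a1 /\ p2 = a2 - 1.
Proof. zb. Qed.

Lemma Inv_step A x a b : A a -> A b -> adj a b -> Inv A x a -> Inv A x b.
Proof.
  destruct a as [a1 a2], b as [b1 b2]. intros Ha Hb Hab [h [H1 H2]].
  apply adj_cases in Hab. destruct Hab as [[-> ->]|[[-> ->]|[[-> ->]|[-> ->]]]].
  - exists (fun p => xorb (h p) (sigR a1 a2 p)). split; intros p1 p2 E; simpl in E.
    + destruct (xor4 _ _ _ _ _ (ray (a1,a2) (p1+1) p2) _ E) as [E'|E']; [auto|].
      exfalso; exact (sR_H _ _ _ _ E').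
    + destruct (xor2 _ _ _ _ E) as [E'|E']; [auto|].
      apply sR_V in E'. destruct E' as [-> <-]. auto.
  - exists (fun p => xorb (h p) (sigL a1 a2 p)). split; intros p1 p2 E; simpl in E.
    + destruct (xor4 _ _ _ _ _ (ray (a1,a2) (p1+1) p2) _ E) as [E'|E']; [auto|].
      exfalso; exact (sL_H _ _ _ _ E').
    + destruct (xor2 _ _ _ _ E) as [E'|E']; [auto|].
      apply sL_V in E'. destruct E' as [-> <-]. replace (a1-1+1) with a1 by lia. auto.
  - exists (fun p => xorb (h p) false). split; intros p1 p2 E; simpl in E.
    + destruct (xor4 _ _ _ _ _ (ray (a1,a2) (p1+1) p2) _ E) as [E'|E']; [auto|].
      apply sU_H in E'. destruct E' as [E1 ->]. rewrite E1. auto.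
    + rewrite !xorb_false_r in E. auto.
  - exists (fun p => xorb (h p) false). split; intros p1 p2 E; simpl in E.
    + destruct (xor4 _ _ _ _ _ (ray (a1,a2) (p1+1) p2) _ E) as [E'|E']; [auto|].
      apply sD_H in E'. destruct E' as [E1 ->]. rewrite E1. replace (a2-1+1) with a2 by lia. auto.
    + rewrite !xorb_false_r in E. auto.
Qed.

Lemma xor5 hp hq sp sq rx rz : xorb (xorb hp sp) (xorb hq sq) = true ->
  xorb (xorb (xorb hp hq) rx) rz = false -> xorb (xorb (xorb sp sq) rx) rz = true.
Proof. destruct hp, hq, sp, sq, rx, rz; simpl; auto. Qed.

Lemma fin_H i j p1 p2 : xorb (xorb (xorb (sigL (i+1) (j+1) (p1,p2)) (sigL (i+1) (j+1) (p1+1,p2))) (ray (i,j) (p1+1) p2)) (ray (i+1,j+1) (p1+1) p2) = true -> p1 + 1 = i /\ p2 = j.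
Proof. zb. Qed.

Lemma xorb_eq' a b : xorb a b = false -> a = b.
Proof. destruct a, b; simpl; congruence. Qed.

Lemma checker (A B : pt -> Prop) i j : (forall p, A p -> B p -> False) ->
  A (i,j) -> A (i+1,j+1) -> B (i+1,j) -> B (i,j+1) ->
  reach (fun u v => A u /\ A v /\ adj u v) (i,j) (i+1,j+1) ->
  reach (fun u v => B u /\ B v /\ adj u v) (i+1,j) (i,j+1) -> False.
Proof.
  intros AB Ax Az By Bw PA PB.
  assert (HI : Inv A (i,j) (i+1,j+1)).
  { assert (G : forall c, clos_refl_trans_n1 pt (fun u v => A u /\ A v /\ adj u v) (i,j) c -> Inv A (i,j) c).
    2: { apply G, clos_rt_rtn1, PA. }
    intros c0 PA0. induction PA0 as [|b c [Hb [Hc Hbc]] _ IH].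
    - exists (fun _ => false). split; intros p1 p2 E; simpl in E.
      + destruct (ray (i,j) (p1+1) p2); discriminate.
      + discriminate.
    - exact (Inv_step _ _ _ _ Hb Hc Hbc IH). }
  destruct HI as [h0 [H1 H2]].
  set (A' := fun p => A p \/ p = (i,j+1)).
  set (h := fun p => xorb (h0 p) (sigL (i+1) (j+1) p)).
  assert (NH : forall p1 p2, xorb (h (p1,p2)) (h (p1+1,p2)) = true -> A' (p1+1,p2) /\ A' (p1+1,p2+1)).
  { intros p1 p2 E. unfold h in E.
    destruct (xorb (xorb (xorb (h0 (p1,p2)) (h0 (p1+1,p2))) (ray (i,j) (p1+1) p2)) (ray (i+1,j+1) (p1+1) p2)) eqn:Eo.
    - destruct (H1 _ _ Eo). unfold A'; auto.
    - pose proof (fin_H _ _ _ _ (xor5 _ _ _ _ _ _ E Eo)) as [E1 E2]. rewrite E1, E2.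
      unfold A'; auto. }
  assert (NV : forall p1 p2, xorb (h (p1,p2)) (h (p1,p2+1)) = true -> A' (p1,p2+1) /\ A' (p1+1,p2+1)).
  { intros p1 p2 E. unfold h in E. destruct (xor2 _ _ _ _ E) as [E'|E'].
    - destruct (H2 _ _ E'). unfold A'; auto.
    - apply sL_V in E'. destruct E' as [E1 E2]. rewrite E1, E2. replace (i+1-1) with i by lia.
      replace (i+1) with (i+1) by lia. unfold A'; auto. }
  assert (Aw : ~ A (i,j+1)) by (intro; eauto).
  assert (X1 : xorb (h (i-1,j)) (h (i,j)) = true).
  { specialize (H1 (i-1) j). replace (i-1+1) with i in H1 by lia. unfold h.
    revert H1. unfold ray, sigL; simpl. rewrite Z.eqb_refl, Z.leb_refl.
    destruct (Z.eqb_spec i (i+1)); [lia|]. destruct (Z.eqb_spec (i-1) (i+1-1)); [lia|].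
    destruct (Z.eqb_spec i (i+1-1)); [|lia]. destruct (Z.leb_spec (j+1) j); [lia|].
    destruct (h0 (i-1,j)), (h0 (i,j)); simpl; intuition. }
  assert (X2 : xorb (h (i,j)) (h (i,j+1)) = true).
  { specialize (H2 i j). unfold h.
    revert H2. unfold sigL; simpl.
    destruct (Z.eqb_spec i (i+1-1)); [|lia]. destruct (Z.leb_spec (j+1) j); [lia|].
    destruct (Z.leb_spec (j+1) (j+1)); [|lia].
    destruct (h0 (i,j+1)), (h0 (i,j)); simpl; intuition. }
  assert (AR : forall m n, ~ A' (m,n) ->
     h (m-1,n-1) = h (m,n) /\ h (m,n-1) = h (m,n) /\ h (m-1,n) = h (m,n)).
  { intros m n Hmn.
    assert (E1 : h (m-1,n-1) = h (m,n-1)).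
    { apply xorb_eq'. destruct (xorb (h (m-1,n-1)) (h (m,n-1))) eqn:E; [|reflexivity].
      exfalso. pose proof (NH (m-1) (n-1)) as E'. replace (m-1+1) with m in E' by lia.
      replace (n-1+1) with n in E' by lia. apply E' in E. tauto. }
    assert (E2 : h (m-1,n) = h (m,n)).
    { apply xorb_eq'. destruct (xorb (h (m-1,n)) (h (m,n))) eqn:E; [|reflexivity].
      exfalso. pose proof (NH (m-1) n) as E'. replace (m-1+1) with m in E' by lia. apply E' in E. tauto. }
    assert (E3 : h (m-1,n-1) = h (m-1,n)).
    { apply xorb_eq'. destruct (xorb (h (m-1,n-1)) (h (m-1,n))) eqn:E; [|reflexivity].
      exfalso. pose proof (NV (m-1) (n-1)) as E'. replace (n-1+1) with n in E' by lia.
      replace (m-1+1) with m in E' by lia. apply E' in E. tauto. }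
    assert (E4 : h (m,n-1) = h (m,n)).
    { apply xorb_eq'. destruct (xorb (h (m,n-1)) (h (m,n))) eqn:E; [|reflexivity].
      exfalso. pose proof (NV m (n-1)) as E'. replace (n-1+1) with n in E' by lia.
      apply E' in E. tauto. }
    split; [congruence|split; congruence]. }
  assert (J : forall c, clos_refl_trans_n1 pt (fun u v => B u /\ B v /\ adj u v) (i+1,j) c ->
              c <> (i,j+1) /\ h c = h (i,j)).
  { intros c Hc. induction Hc as [|[b1 b2] [c1 c2] [Hb [Hc Hbc]] _ [Jn Jh]].
    - split. { rewrite pair_eq; lia. }
      assert (NA : ~ A' (i+1,j)) by (unfold A'; rewrite pair_eq; intros [H|H]; [eauto|lia]).
      destruct (AR _ _ NA) as [_ [_ E]]. replace (i+1-1) with i in E by lia. auto.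
    - assert (NAb : ~ A' (b1,b2)) by (unfold A'; intros [H|H]; [eauto|contradiction]).
      apply adj_cases in Hbc. destruct (classic ((c1,c2) = (i,j+1))) as [Ew|Ew].
      + exfalso. rewrite pair_eq in Ew. destruct Ew as [Ew1 Ew2]. subst c1 c2.
        destruct (AR _ _ NAb) as [_ [Ed _]].
        destruct Hbc as [[E0 E]|[[E0 E]|[[E0 E]|[E0 E]]]].
        * assert (b1 = i - 1) by lia. assert (b2 = j+1) by lia. subst b1 b2. replace (j+1-1) with j in Ed by lia.
          rewrite Ed, Jh in X1. destruct (h (i,j)); discriminate.
        * assert (b1 = i + 1) by lia. assert (b2 = j+1) by lia. subst b1 b2. eauto.
        * assert (b1 = i) by lia. assert (b2 = j) by lia. subst b1 b2. eauto.
        * assert (b1 = i) by lia. assert (b2 = j+2) by lia. subst b1 b2. replace (j+2-1) with (j+1) in Ed by lia.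
          rewrite Ed, Jh in X2. destruct (h (i,j)); discriminate.
      + split; [exact Ew|].
        assert (NAc : ~ A' (c1,c2)) by (unfold A'; intros [H|H]; [eauto|contradiction]).
        destruct (AR _ _ NAb) as [Eb1 [Eb2 Eb3]]. destruct (AR _ _ NAc) as [Ec1 [Ec2 Ec3]].
        destruct Hbc as [[-> ->]|[[-> ->]|[[-> ->]|[-> ->]]]].
        * replace (b1+1-1) with b1 in Ec3 by lia. congruence.
        * congruence.
        * replace (b2+1-1) with b2 in Ec2 by lia. congruence.
        * congruence. }
  apply clos_rt_rtn1 in PB. destruct (J _ PB) as [N _]. apply N; reflexivity.
Qed.
Lemma DB_either V1 p v : dual_boundary V1 p v \/ dual_boundary V1 v p <-> dual_boundary V1 p v.
Proof. split; [intros [H|H]; auto using DB_sym | auto]. Qed.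

Lemma pick_RL V1 i j : sep V1 (i+1,j) (i+1,j+1) -> sep V1 (i,j) (i,j+1) -> ~ sep V1 (i,j+1) (i+1,j+1) -> ~ sep V1 (i,j) (i+1,j) ->
  degree_two (dual_boundary V1) (i,j).
Proof.
  intros H1 H2 H3 H4. exists (i+1,j), (i-1,j). split; [intro E; rewrite pair_eq in E; lia|].
  intro v; rewrite DB_either, DB_iff. split.
  - intros [[-> ?]|[[-> ?]|[[-> ?]|[-> ?]]]]; tauto.
  - intros [->| ->]; tauto.
Qed.

Lemma pick_RU V1 i j : sep V1 (i+1,j) (i+1,j+1) -> sep V1 (i,j+1) (i+1,j+1) -> ~ sep V1 (i,j) (i,j+1) -> ~ sep V1 (i,j) (i+1,j) ->
  degree_two (dual_boundary V1) (i,j).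
Proof.
  intros H1 H2 H3 H4. exists (i+1,j), (i,j+1). split; [intro E; rewrite pair_eq in E; lia|].
  intro v; rewrite DB_either, DB_iff. split.
  - intros [[-> ?]|[[-> ?]|[[-> ?]|[-> ?]]]]; tauto.
  - intros [->| ->]; tauto.
Qed.

Lemma pick_RD V1 i j : sep V1 (i+1,j) (i+1,j+1) -> sep V1 (i,j) (i+1,j) -> ~ sep V1 (i,j) (i,j+1) -> ~ sep V1 (i,j+1) (i+1,j+1) ->
  degree_two (dual_boundary V1) (i,j).
Proof.
  intros H1 H2 H3 H4. exists (i+1,j), (i,j-1). split; [intro E; rewrite pair_eq in E; lia|].
  intro v; rewrite DB_either, DB_iff. split.
  - intros [[-> ?]|[[-> ?]|[[-> ?]|[-> ?]]]]; tauto.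
  - intros [->| ->]; tauto.
Qed.

Lemma pick_LU V1 i j : sep V1 (i,j) (i,j+1) -> sep V1 (i,j+1) (i+1,j+1) -> ~ sep V1 (i+1,j) (i+1,j+1) -> ~ sep V1 (i,j) (i+1,j) ->
  degree_two (dual_boundary V1) (i,j).
Proof.
  intros H1 H2 H3 H4. exists (i-1,j), (i,j+1). split; [intro E; rewrite pair_eq in E; lia|].
  intro v; rewrite DB_either, DB_iff. split.
  - intros [[-> ?]|[[-> ?]|[[-> ?]|[-> ?]]]]; tauto.
  - intros [->| ->]; tauto.
Qed.

Lemma pick_LD V1 i j : sep V1 (i,j) (i,j+1) -> sep V1 (i,j) (i+1,j) -> ~ sep V1 (i+1,j) (i+1,j+1) -> ~ sep V1 (i,j+1) (i+1,j+1) ->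
  degree_two (dual_boundary V1) (i,j).
Proof.
  intros H1 H2 H3 H4. exists (i-1,j), (i,j-1). split; [intro E; rewrite pair_eq in E; lia|].
  intro v; rewrite DB_either, DB_iff. split.
  - intros [[-> ?]|[[-> ?]|[[-> ?]|[-> ?]]]]; tauto.
  - intros [->| ->]; tauto.
Qed.

Lemma pick_UD V1 i j : sep V1 (i,j+1) (i+1,j+1) -> sep V1 (i,j) (i+1,j) -> ~ sep V1 (i+1,j) (i+1,j+1) -> ~ sep V1 (i,j) (i,j+1) ->
  degree_two (dual_boundary V1) (i,j).
Proof.
  intros H1 H2 H3 H4. exists (i,j+1), (i,j-1). split; [intro E; rewrite pair_eq in E; lia|].
  intro v; rewrite DB_either, DB_iff. split.
  - intros [[-> ?]|[[-> ?]|[[-> ?]|[-> ?]]]]; tauto.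
  - intros [->| ->]; tauto.
Qed.

Lemma deg2 V1 : connected_set V1 -> connected_set (compl V1) ->
  forall u, dual_endpoints V1 u -> degree_two (dual_boundary V1) u.
Proof.
  intros C1 C2 [i j] [v0 Hv0].
  rewrite DB_either, DB_iff in Hv0.
  assert (Hs : sep V1 (i+1,j) (i+1,j+1) \/ sep V1 (i,j) (i,j+1) \/ sep V1 (i,j+1) (i+1,j+1) \/ sep V1 (i,j) (i+1,j))
    by tauto. clear Hv0.
  assert (NC1 : ~ (V1 (i,j) /\ V1 (i+1,j+1) /\ ~ V1 (i+1,j) /\ ~ V1 (i,j+1))).
  { intros [H1 [H2 [H3 H4]]]. apply (checker V1 (compl V1) i j); auto. }
  assert (NC2 : ~ (~ V1 (i,j) /\ ~ V1 (i+1,j+1) /\ V1 (i+1,j) /\ V1 (i,j+1))).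
  { intros [H1 [H2 [H3 H4]]]. apply (checker (compl V1) V1 i j); auto. }
  unfold degree_two.
  destruct (classic (V1 (i,j))), (classic (V1 (i+1,j))), (classic (V1 (i+1,j+1))), (classic (V1 (i,j+1)));
  first [ exfalso; unfold sep in *; tauto
  | apply pick_RL; unfold sep; tauto
  | apply pick_RU; unfold sep; tauto
  | apply pick_RD; unfold sep; tauto
  | apply pick_LU; unfold sep; tauto
  | apply pick_LD; unfold sep; tauto
  | apply pick_UD; unfold sep; tauto
  ].
Qed.

Definition bnd (l : list pt) : Z := fold_right (fun p acc => Z.abs (fst p) + Z.abs (snd p) + acc) 0 l.

Lemma bnd_ge0 l : 0 <= bnd l.
Proof. induction l; simpl; lia. Qed.

Lemma bnd_in l p : In p l -> Z.abs (fst p) <= bnd l /\ Z.abs (snd p) <= bnd l.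
Proof.
  induction l as [|a l IH]; simpl; [tauto|]. pose proof (bnd_ge0 l).
  intros [->|Hi]; [lia|]. specialize (IH Hi). lia.
Qed.

Definition rng (K : Z) : list Z := map (fun n => Z.of_nat n - K) (seq 0 (Z.to_nat (2*K+1))).

Lemma in_rng K a : Z.abs a < K -> In a (rng K).
Proof.
  intro H. unfold rng. apply in_map_iff. exists (Z.to_nat (a + K)). split; [lia|].
  apply in_seq. lia.
Qed.

Lemma infinite_W V1 : infinite_set V1 -> infinite_set (compl V1) -> infinite_set (dual_endpoints V1).
Proof.
  intros I1 I2 l. apply NNPP; intro Hn.
  assert (Hin : forall x, dual_endpoints V1 x -> In x l)
    by (intros x Hx; apply NNPP; intro; apply Hn; eauto).
  set (K := bnd l + 2).
  assert (HK : 2 <= K) by (pose proof (bnd_ge0 l); unfold K; lia).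
  assert (step : forall c d, adj c d -> (K <= Z.abs (fst c) \/ K <= Z.abs (snd c)) -> (V1 c <-> V1 d)).
  { intros [c1 c2] d Hcd Hf.
    assert (NS : ~ sep V1 (c1,c2) d).
    { intro S. destruct (bis_mk _ _ Hcd) as [[p1 p2] [q Hb]].
      pose proof (sep_DB _ _ _ _ _ Hb S) as HD.
      assert (W : dual_endpoints V1 (p1,p2)) by (exists q; left; exact HD).
      apply Hin, bnd_in in W. apply bis_range in Hb. simpl in *. unfold K in Hf. lia. }
    unfold sep in NS. destruct (classic (V1 (c1,c2))), (classic (V1 d)); tauto. }
  assert (col : forall m, K <= Z.abs m -> forall n, V1 (m,n) <-> V1 (m,0)).
  { intros m Hm. apply (Zind2 (fun n => V1 (m,n) <-> V1 (m,0))); [tauto|]. intro n.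
    assert (V1 (m,n) <-> V1 (m,n+1)) by (refine (step (m,n) (m,n+1) _ _); [unfold adj; simpl; lia | simpl; lia]). tauto. }
  assert (row : forall n, K <= Z.abs n -> forall m, V1 (m,n) <-> V1 (0,n)).
  { intros n Hn'. apply (Zind2 (fun m => V1 (m,n) <-> V1 (0,n))); [tauto|]. intro m.
    assert (V1 (m,n) <-> V1 (m+1,n)) by (refine (step (m,n) (m+1,n) _ _); [unfold adj; simpl; lia | simpl; lia]). tauto. }
  assert (far : forall c1 c2, K <= Z.abs c1 \/ K <= Z.abs c2 -> (V1 (c1,c2) <-> V1 (K,K))).
  { intros c1 c2 [Hc|Hc].
    - rewrite (col c1 Hc c2), <- (col c1 Hc K), (row K ltac:(lia) c1), <- (row K ltac:(lia) K). tauto.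
    - rewrite (row c2 Hc c1), <- (row c2 Hc K), (col K ltac:(lia) c2), <- (col K ltac:(lia) K). tauto. }
  assert (box : forall c1 c2, ~ In (c1,c2) (list_prod (rng K) (rng K)) -> K <= Z.abs c1 \/ K <= Z.abs c2).
  { intros c1 c2 Hc. apply NNPP; intro Hc'. apply Hc, in_prod; apply in_rng; lia. }
  destruct (classic (V1 (K,K))) as [HV|HV].
  - destruct (I2 (list_prod (rng K) (rng K))) as [[x1 x2] [Hx Hnx]].
    apply Hx, (far x1 x2 (box _ _ Hnx)), HV.
  - destruct (I1 (list_prod (rng K) (rng K))) as [[x1 x2] [Hx Hnx]].
    apply HV, (far x1 x2 (box _ _ Hnx)), Hx.
Qed.

Theorem propositionA1 (V1 : pt -> Prop) :
  infinite_set V1 -> connected_set V1 ->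
  infinite_set (compl V1) -> connected_set (compl V1) ->
  (forall u w, dual_endpoints V1 u -> dual_endpoints V1 w ->
     reach (dual_boundary V1) u w) /\
  infinite_set (dual_endpoints V1) /\
  (forall u, dual_endpoints V1 u -> degree_two (dual_boundary V1) u).
Proof.
  intros I1 C1 I2 C2. split; [|split].
  - apply conn_main; auto.
  - apply infinite_W; auto.
  - apply deg2; auto.
Qed.
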